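(* Let $G$ be an $r$-graph on $n$ vertices and let $\varepsilon>0$. One can delete at most $\varepsilon n^r$ edges from $G$ so that the resulting $r$-graph $G'$ has the following property: for any $\mathbf x,\mathbf y\in\vec E(G')$ that are tightly connected in $G'$, there is a tight walk from $\mathbf x$ to $\mathbf y$ in $G'$ of stretch $sr$ for some integer $s\le(2r+1)\varepsilon^{-r}$.
   Context: An $r$-graph is an $r$-uniform hypergraph. An oriented edge of $G$ is an ordered $r$-tuple $x_1\cdots x_r$ whose underlying set is an edge of $G$; $\vec E(G)$ is the set of oriented edges. $\mathbf x,\mathbf y\in\vec E(G)$ are tightly connected (in $G$) if there is a sequence $\mathbf x=\mathbf z^{(0)},\dots,\mathbf z^{(t)}=\mathbf y$ of oriented edges of $G$ such that consecutive terms differ in at most one coordinate. A tight walk of stretch $\ell$ is a sequence $v_1\cdots v_{\ell+r}$ of (not necessarily distinct) vertices such that $v_{i+1}\cdots v_{i+r}\in\vec E(G)$ for each $0\le i\le\ell$; it is a walk from $v_1\cdots v_r$ to $v_{\ell+1}\cdots v_{\ell+r}$. *)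

(* Defs.v *)
From HB Require Import structures.
From mathcomp Require Import all_boot all_order all_algebra.
Set Implicit Arguments. Unset Strict Implicit. Unset Printing Implicit Defensive.

Definition uniform (V : finType) (r : nat) (G : {set {set V}}) : Prop :=
  forall e, e \in G -> #|e| = r.

Definition oriented_edge (V : finType) (r : nat) (G : {set {set V}})
  (s : seq V) : bool := (size s == r) && ([set v in s] \in G).

Definition differ_le1 (V : finType) (r : nat) (x y : r.-tuple V) : bool :=
  #|[set i : 'I_r | tnth x i != tnth y i]| <= 1.

Definition tight_step (V : finType) (r : nat) (G : {set {set V}}) :
  rel (r.-tuple V) :=
  fun x y => [&& oriented_edge r G x, oriented_edge r G y & differ_le1 x y].

Definition tightly_connected (V : finType) (r : nat) (G : {set {set V}})
  (x y : r.-tuple V) : Prop :=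
  [/\ oriented_edge r G x, oriented_edge r G y & connect (tight_step G) x y].

Definition tight_walk (V : finType) (r : nat) (G : {set {set V}}) (l : nat)
  (x y : r.-tuple V) : Prop :=
  exists w : seq V,
    [/\ size w = l + r,
        forall i, i <= l -> oriented_edge r G (take r (drop i w)),
        take r w = val x
      & drop l w = val y].

(* Main.v *)
Require Import Defs.
From HB Require Import structures.
From mathcomp Require Import all_boot all_order all_algebra.
From mathcomp Require Import zify.
Set Implicit Arguments. Unset Strict Implicit. Unset Printing Implicit Defensive.

Section Reach.
Variable T : finType.
Variable e : rel T.

Definition reach k x y := [exists p : k.-tuple T, path e x p && (last x p == y)].

Lemma reachP k x y :
  reflect (exists p : seq T, [/\ size p = k, path e x p & last x p = y]) (reach k x y).
Proof.
apply: (iffP existsP) => [[p /andP[hp /eqP hl]] | [p [hs hp hl]]].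
  by exists (val p); rewrite size_tuple.
have hs' : size p == k by apply/eqP.
by exists (Tuple hs'); rewrite /= hp hl eqxx.
Qed.

Lemma reach_cat a b x y z : reach a x y -> reach b y z -> reach (a + b) x z.
Proof.
move=> /reachP[p [hs hp hl]] /reachP[q [hs' hq hl']].
apply/reachP; exists (p ++ q); split.
- by rewrite size_cat hs hs'.
- by rewrite cat_path hp hl hq.
- by rewrite last_cat hl.
Qed.

Lemma reach_sym a x y : symmetric e -> reach a x y -> reach a y x.
Proof.
move=> hsym /reachP[p [hs hp hl]]; apply/reachP.
exists (rev (belast x p)); split.
- by rewrite size_rev size_belast.
- rewrite -hl rev_path.
  have E : (fun z => e^~ z) =2 e by move=> u v; exact: hsym.
  by rewrite (eq_path E).
- case: p hs hp hl => [|a0 p] hs hp hl /=; first by rewrite -hl.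
  by rewrite rev_cons last_rcons.
Qed.

Lemma reach_split k x y t : reach k x y -> t <= k ->
  exists z, reach t x z /\ reach (k - t) z y.
Proof.
move=> /reachP[p [hs hp hl]] ht.
have := hp; rewrite -[p in path _ _ p](cat_take_drop t) cat_path => /andP[h1 h2].
exists (last x (take t p)); split; apply/reachP.
  by exists (take t p); split => //; rewrite size_takel // hs.
exists (drop t p); split => //; first by rewrite size_drop hs.
by rewrite -last_cat cat_take_drop.
Qed.

Lemma reach_step k x y z : reach k x y -> e y z -> reach k.+1 x z.
Proof.
move=> h hyz; rewrite -addn1; apply: (reach_cat h).
by apply/reachP; exists [:: z]; rewrite /= hyz.
Qed.

Lemma reach0 x : reach 0 x x.
Proof. by apply/reachP; exists [::]. Qed.

End Reach.

Lemma drop_cat_le (T : Type) i (s1 s2 : seq T) : i <= size s1 -> drop i (s1 ++ s2) = drop i s1 ++ s2.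
Proof.
elim: s1 i => [|a s IH] [|i] //=; first by move=> _; rewrite drop0.
by move=> h; apply: IH.
Qed.

Section Walk.
Variables (V : finType) (r : nat) (G : {set {set V}}).

Lemma reach0_eq (e : rel (r.-tuple V)) x y : reach e 0 x y -> x = y.
Proof. by move=> /reachP[[|a p] [hs hp hl]]. Qed.

Lemma reach1_step (e : rel (r.-tuple V)) x y : reach e 1 x y -> e x y.
Proof. by move=> /reachP[[|a [|b p]] [hs hp hl]] //=; move: hp hl => /= /andP[h _] <-. Qed.

Lemma walk0 (x : r.-tuple V) : oriented_edge r G x -> tight_walk G 0 x x.
Proof.
move=> hx; exists (val x); split.
- by rewrite size_tuple.
- by move=> i; rewrite leqn0 => /eqP ->; rewrite drop0 take_oversize // size_tuple.
- by rewrite take_oversize // size_tuple.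
- by rewrite drop0.
Qed.

Lemma mix_eq (x0 : V) (y y' : r.-tuple V) j : differ_le1 y y' -> j <= r ->
  take j y' ++ drop j y = y \/ take j y' ++ drop j y = y'.
Proof.
move=> /card_le1_eqP hd hj.
have key : forall i1 i2, i1 < r -> i2 < r -> nth x0 y i1 != nth x0 y' i1 ->
    nth x0 y i2 != nth x0 y' i2 -> i1 = i2.
  move=> i1 i2 h1 h2 d1 d2.
  have := hd (Ordinal h1) (Ordinal h2).
  rewrite !inE !(tnth_nth x0) /= => /(_ d1 d2) [] //.
have hsz : size (take j y' ++ drop j y) = r.
  by rewrite size_cat size_takel ?size_drop ?size_tuple ?subnKC.
case: (boolP [exists i : 'I_r, (i < j) && (nth x0 y i != nth x0 y' i)]).
- move=> /existsP[i0 /andP[hi0 d0]]; right.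
  apply: (eq_from_nth (x0 := x0)); first by rewrite hsz size_tuple.
  move=> i; rewrite hsz => hi; rewrite nth_cat size_takel ?size_tuple //.
  case: ltnP => hij; first by rewrite nth_take.
  rewrite nth_drop subnKC //.
  apply/eqP; apply: contraT => d.
  have := key _ _ (ltn_ord i0) hi d0 d => h.
  by move: hi0; rewrite h ltnNge hij.
- rewrite negb_exists => /forallP hall; left.
  apply: (eq_from_nth (x0 := x0)); first by rewrite hsz size_tuple.
  move=> i; rewrite hsz => hi; rewrite nth_cat size_takel ?size_tuple //.
  case: ltnP => hij; last by rewrite nth_drop subnKC.
  rewrite nth_take //.
  have := hall (Ordinal hi); rewrite /= hij /= negbK => /eqP ->. done.
Qed.

Lemma walk_step (x0 : V) l (x y y' : r.-tuple V) :
  tight_walk G l x y -> tight_step G y y' -> tight_walk G (l + r) x y'.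
Proof.
move=> [w [hs hwin htake hdrop]] /and3P[hy hy' hd].
exists (w ++ y'); split.
- by rewrite size_cat hs size_tuple.
- move=> i hi; case: (leqP i l) => hil.
  + have h1 : i <= size w by rewrite hs (leq_trans hil) // leq_addr.
    rewrite (drop_cat_le _ h1).
    have h2 : r <= size (drop i w) by rewrite size_drop hs leq_subRL ?leq_add2r // -hs.
    rewrite (takel_cat _ h2).
    exact: hwin.
  + have hir : i <= size w by rewrite hs.
    rewrite (drop_cat_le _ hir).
    have -> : drop i w = drop (i - l) (drop l w) by rewrite drop_drop subnK // ltnW.
    rewrite hdrop.
    have hj : i - l <= r by rewrite leq_subLR -hs.
    move: (i - l) hj => j hj.
    rewrite take_cat size_drop size_tuple.
    have -> : (r < r - j) = false by rewrite ltnNge leq_subr.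
    rewrite subKn //.
    rewrite /oriented_edge size_cat size_drop size_takel ?size_tuple //.
    rewrite subnK // eqxx /=.
    have -> : [set v in drop j y ++ take j y'] = [set v in take j y' ++ drop j y].
      by apply/setP => v; rewrite !inE !mem_cat orbC.
    case: (mix_eq x0 hd hj) => ->.
    * by move: hy => /andP[].
    * by move: hy' => /andP[].
- have h3 : r <= size w by rewrite hs leq_addl.
  by rewrite (takel_cat _ h3).
- by rewrite drop_size_cat.
Qed.

Lemma walk_of_reach (x0 : V) k (x y : r.-tuple V) :
  oriented_edge r G x -> reach (tight_step G) k x y -> tight_walk G (k * r) x y.
Proof.
move=> hx; elim: k y => [|k IH] y.
  by move=> /reach0_eq <-; apply: walk0.
move=> h; have [z [h1 h2]] := reach_split h (leqnSn k).
rewrite subSnn in h2; have hs := reach1_step h2.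
by rewrite mulSn addnC; apply: (walk_step x0 (IH _ h1) hs).
Qed.

End Walk.

Import Order.TTheory GRing.Theory Num.Theory.

Section Del.
Variables (R : realFieldType) (V : finType) (r : nat) (th : R).
Hypothesis hth : (0 <= th)%R.

Definition cod (H : {set {set V}}) (S : {set V}) := #|[set e in H | S \subset e]|.
Definition keys (H : {set {set V}}) :=
  [set S : {set V} | (#|S| == r.-1) && [exists e in H, S \subset e]].
Definition goodb (H : {set {set V}}) :=
  [forall S : {set V}, (S \in keys H) ==> (th <= (cod H S)%:R)%R].

Lemma card_setU_le (T : finType) (A B : {set T}) : #|A :|: B| <= #|A| + #|B|.
Proof. by rewrite cardsU leq_subr. Qed.

Lemma deletion (H : {set {set V}}) :
  exists H' : {set {set V}}, [/\ H' \subset H, goodb H' & ((#|H :\: H'|)%:R <= th * (#|keys H|)%:R)%R].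
Proof.
have [m hm] : exists m, #|H| < m by exists #|H|.+1.
elim: m H hm => [|m IH] H hm; first by [].
case: (boolP (goodb H)) => hg.
  exists H; split => //; first by rewrite setDv cards0 mulr_ge0.
move: hg; rewrite negb_forall => /existsP[S]; rewrite negb_imply => /andP[hS hlt].
rewrite -ltNge in hlt.
set D := [set e in H | S \subset e].
set H1 := H :\: D.
have [e0 he0 hSe0] : exists2 e, e \in H & S \subset e.
  by move: hS; rewrite inE => /andP[_ /existsP[e /andP[h1 h2]]]; exists e.
have hH1 : #|H1| < m.
  have : #|H1| <= #|H :\ e0|.
    apply: subset_leq_card; apply/subsetP => e; rewrite !inE => /andP[hnd ->].
    rewrite andbT; apply: contraNneq hnd => ->; by rewrite he0 hSe0.
  rewrite (cardsD1 e0 H) he0 add1n ltnS in hm => h.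
  exact: leq_ltn_trans h hm.
have [H' [hsub hg hc]] := IH H1 hH1.
exists H'; split => //.
  by apply: subset_trans hsub _; apply: subsetDl.
have hk : #|keys H1| + 1 <= #|keys H|.
  rewrite (cardsD1 S (keys H)) hS addnC leq_add2l; apply: subset_leq_card.
  apply/subsetP => T; rewrite !inE => /andP[hT /existsP[e /andP[heH1 hTe]]].
  rewrite hT /=; move: heH1; rewrite !inE => /andP[hnd heH].
  apply/andP; split; last by apply/existsP; exists e; rewrite heH hTe.
  by apply: contraNneq hnd => hTS; rewrite heH -hTS hTe.
have hsplit : #|H :\: H'| <= #|D| + #|H1 :\: H'|.
  apply: leq_trans (card_setU_le _ _); apply: subset_leq_card.
  apply/subsetP => f; rewrite !inE => /andP[heH' heH].
  by case: (S \subset f); rewrite /= ?heH' ?heH.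
apply: (@le_trans _ _ ((#|D| + #|H1 :\: H'|)%:R)%R); first by rewrite ler_nat.
rewrite natrD.
apply: (@le_trans _ _ (th + th * #|keys H1|%:R)%R).
  by apply: lerD; [apply: ltW; exact: hlt | exact: hc].
apply: (@le_trans _ _ (th * (#|keys H1| + 1)%:R)%R).
  by rewrite natrD mulrDr mulr1 addrC.
by apply: ler_wpM2l; [exact: hth | rewrite ler_nat; exact: hk].
Qed.

End Del.

Section Balls.
Variables (R : realFieldType) (V : finType) (r : nat) (th : R) (H : {set {set V}}).
Hypothesis hth : (0 <= th)%R.
Hypothesis hunif : uniform r H.
Hypothesis hgood : goodb r th H.

Definition updn (w : r.-tuple V) (k : nat) (u : V) : r.-tuple V :=
  [tuple (if val j == k then u else tnth w j) | j < r].
Definition mixn (w z : r.-tuple V) (k : nat) : r.-tuple V :=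
  [tuple (if val j == k then tnth z j else tnth w j) | j < r].

Definition Uset (w : r.-tuple V) k := [set u : V | oriented_edge r H (updn w k u)].

Lemma codeg_U (w : r.-tuple V) k : k < r -> oriented_edge r H w ->
  (th <= (#|Uset w k|)%:R)%R.
Proof.
move=> hk /andP[_ hwH].
set i := Ordinal hk.
set S := [set v in w] :\ tnth w i.
have hcw : #|[set v in w]| = r by apply: hunif.
have hcS : #|S| = r.-1.
  by move: hcw; rewrite (cardsD1 (tnth w i)) inE mem_tnth add1n => <-.
have hSk : S \in keys r H.
  rewrite inE hcS eqxx /=; apply/existsP; exists [set v in w].
  by rewrite hwH subsetDl.
have := forallP hgood S; rewrite hSk /= => hth1.
apply: (le_trans hth1); rewrite ler_nat.
apply: (@leq_trans #|[set [set v in updn w k u] | u in Uset w k]|); last first.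
  exact: leq_imset_card.
apply: subset_leq_card; apply/subsetP => e; rewrite inE => /andP[heH hSe].
have hce : #|e| = r by apply: hunif.
have [u hue huS] : exists2 u, u \in e & u \notin S.
  apply/exists_inP; rewrite -negb_forall_in; apply/negP => /forall_inP hall.
  have : e \subset S by apply/subsetP => v /hall.
  move=> /subset_leq_card; rewrite hce hcS.
  have : 0 < r by exact: (leq_ltn_trans (leq0n k) hk).
  by case: (r) => // r' _; rewrite ltnn.
have eE : u |: S = e.
  apply/eqP; rewrite eqEcard; apply/andP; split.
    by apply/subsetP => v; rewrite in_setU1 => /orP[/eqP -> // | hv]; apply: (subsetP hSe).
  have : 0 < r by exact: (leq_ltn_trans (leq0n k) hk).
  by rewrite cardsU1 huS hcS hce add1n; case: (r).
have hsub : e \subset [set v in updn w k u].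
  rewrite -eE; apply/subsetP => v; rewrite in_setU1 => /orP[/eqP -> | ]; rewrite ?inE; last move=> /andP[hvi hvw].
    by have := mem_tnth i (updn w k u); rewrite tnth_mktuple /= eqxx.
  move: hvw => /tnthP[j hj].
  have hjk : (val j == k) = false.
    apply/negP => /eqP hjk; move: hvi; rewrite hj; have -> : j = i by apply: val_inj.
    by rewrite eqxx.
  by have := mem_tnth j (updn w k u); rewrite tnth_mktuple hjk -hj.
have eU : [set v in updn w k u] = e.
  apply/esym/eqP; rewrite eqEcard hsub hce cardsE.
  by have := card_size (updn w k u); rewrite size_tuple.
apply/imsetP; exists u => //.
by rewrite inE /oriented_edge size_tuple eqxx eU heH.
Qed.


Fixpoint Wset (z : r.-tuple V) (k : nat) : {set r.-tuple V} :=
  match k with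
  | 0 => [set z]
  | k'.+1 => [set w' | (mixn w' z k' \in Wset z k') && oriented_edge r H w']
  end.

Lemma W_props (z : r.-tuple V) k w : oriented_edge r H z -> w \in Wset z k ->
  [/\ oriented_edge r H w, forall j : 'I_r, k <= j -> tnth w j = tnth z j
    & reach (tight_step H) k z w].
Proof.
move=> hz; elim: k w => [|k IH] w /=.
  by rewrite inE => /eqP ->; split => //; exact: reach0.
rewrite inE => /andP[hm hw].
have [h1 h2 h3] := IH _ hm.
split => //.
  move=> j hj; rewrite -h2 ?(ltnW hj) // tnth_mktuple.
  by have -> : (val j == k) = false by apply/negP => /eqP hjk; move: hj; rewrite hjk ltnn.
apply: (reach_step h3).
rewrite /tight_step h1 hw /=.
apply/card_le1_eqP => j1 j2; rewrite !inE !tnth_mktuple.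
case: (val j1 =P k) => [e1|_]; last by rewrite eqxx.
case: (val j2 =P k) => [e2|_]; last by rewrite eqxx.
by move=> _ _; apply: val_inj; rewrite e1 e2.
Qed.

Lemma updn_inj (w : r.-tuple V) k : k < r -> injective (updn w k).
Proof.
move=> hk u1 u2 he.
have := congr1 (fun t => tnth t (Ordinal hk)) he.
by rewrite !tnth_mktuple /= eqxx.
Qed.

Lemma W_step (z : r.-tuple V) k : oriented_edge r H z -> k < r ->
  (th * (#|Wset z k|)%:R <= (#|Wset z k.+1|)%:R)%R.
Proof.
move=> hz hk.
have E : #|Wset z k.+1| =
    \sum_(w in Wset z k) #|[set w' in Wset z k.+1 | mixn w' z k == w]|.
  rewrite -sum1_card (partition_big (fun w' => mixn w' z k) (mem (Wset z k))) /=.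
    apply: eq_bigr => w _; rewrite -sum1_card; apply: eq_bigl => w'.
    by rewrite !inE.
  by move=> w'; rewrite inE => /andP[].
rewrite E natr_sum mulr_natr -sumr_const.
apply: ler_sum => w hw.
have [h1 h2 h3] := W_props hz hw.
apply: (le_trans (codeg_U hk h1)); rewrite ler_nat.
rewrite -(card_imset _ (@updn_inj w k hk)).
apply: subset_leq_card; apply/subsetP => t /imsetP[u hu ->].
have hmix : mixn (updn w k u) z k = w.
  apply: eq_from_tnth => j; rewrite !tnth_mktuple.
  by case: eqP => // hj; rewrite h2 // hj.
rewrite !inE hmix eqxx hw /= andbT.
by move: hu; rewrite inE.
Qed.

Lemma W_card (z : r.-tuple V) k : oriented_edge r H z -> k <= r ->
  (th ^+ k <= (#|Wset z k|)%:R)%R.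
Proof.
move=> hz; elim: k => [|k IH] hk; first by rewrite /= cards1 expr0.
rewrite exprS; apply: le_trans (W_step hz hk).
by apply: ler_wpM2l => //; apply: IH; apply: ltnW.
Qed.

End Balls.

Lemma ffact_le_exp n m : n ^_ m <= n ^ m.
Proof.
elim: m n => [|m IH] n; first by rewrite ffactn0 expn0.
rewrite ffactnS expnS leq_mul2l; case: n => //= n.
apply: leq_trans (IH n) _; case: m {IH} => [//|m].
by rewrite leq_exp2r.
Qed.

Lemma keys_card (V : finType) r (H : {set {set V}}) : #|keys r H| <= #|V| ^ r.-1.
Proof.
apply: (@leq_trans #|[set A : {set V} | #|A| == r.-1]|).
  by apply: subset_leq_card; apply/subsetP => S; rewrite !inE => /andP[-> _].
rewrite card_draws; apply: leq_trans (ffact_le_exp _ _).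
by rewrite -bin_ffact leq_pmulr // fact_gt0.
Qed.

Lemma tight_step_sym (V : finType) r (G : {set {set V}}) : symmetric (tight_step (r:=r) G).
Proof.
move=> a b; rewrite /tight_step /differ_le1.
have -> : [set i | tnth b i != tnth a i] = [set i | tnth a i != tnth b i].
  by apply/setP => i; rewrite !inE eq_sym.
by rewrite andbCA.
Qed.

Lemma reach_oriented (V : finType) r (G : {set {set V}}) t (x z : r.-tuple V) :
  oriented_edge r G x -> reach (tight_step G) t x z -> oriented_edge r G z.
Proof.
move=> hx; elim: t z => [|t IH] z; first by move=> /reach0_eq <-.
move=> h; have [w [h1 h2]] := reach_split h (leqnSn t).
by rewrite subSnn in h2; move: (reach1_step h2) => /and3P[].
Qed.

Lemma arith_contra (a b k r : nat) : (k <= a + r + r + (k - b))%N ->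
  (a + (2 * r + 1) <= b)%N -> (b <= k)%N -> False.
Proof. lia. Qed.

Local Open Scope ring_scope.

Theorem proposition4p1 (R : realFieldType) (r : nat) (V : finType)
  (G : {set {set V}}) (eps : R) :
  (0 < r)%N -> uniform r G -> 0 < eps ->
  exists G' : {set {set V}},
    [/\ G' \subset G,
        (#|G :\: G'|%:R <= eps * (#|V|%:R) ^+ r)
      & forall x y : r.-tuple V,
          tightly_connected G' x y ->
          exists s : nat,
            (s%:R <= (2 * r + 1)%:R * eps ^- r) /\ tight_walk G' (s * r) x y].
Proof.
move=> hr hunif heps.
set n := #|V|.
set th : R := eps * n%:R.
have hth : 0 <= th by apply: mulr_ge0; [apply: ltW | apply: ler0n].
have [G' [hsub hgood hc]] := deletion r hth G.
have hunif' : uniform r G' by move=> e he; apply: hunif; apply: (subsetP hsub).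
exists G'; split => //.
  apply: (le_trans hc).
  apply: (@le_trans _ _ (th * (n ^ r.-1)%:R)).
    by apply: ler_wpM2l => //; rewrite ler_nat; apply: keys_card.
  by rewrite /th natrX -mulrA -exprS prednK.
move=> x y [hx hy hconn].
set e := tight_step (r:=r) G'.
have x0 : V := tnth x (Ordinal hr).
have hex : exists k, reach e k x y.
  move: hconn => /connectP[p hp ->]; exists (size p).
  by apply/reachP; exists p.
case: (ex_minnP hex) => k hk hmin.
exists k; split; last by have W := walk_of_reach x0 hx hk; exact W.
set d := (2 * r + 1)%N.
set J := (k %/ d)%N.
have hd : (0 < d)%N by rewrite /d addn1.
have hsym : symmetric e by apply: tight_step_sym.
have hkey : forall m, (m <= J.+1)%N -> exists A : {set r.-tuple V},
    (m%:R * th ^+ r <= #|A|%:R) /\ (forall w, w \in A -> exists j, exists z,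
      [/\ (j < m)%N, reach e (j * d) x z & reach e r z w]).
  elim => [|m IH] hm.
    by exists set0; split; [rewrite mul0r cards0 | move=> w; rewrite inE].
  have [A [hA hAw]] := IH (ltnW hm).
  have hmd : (m * d <= k)%N.
    apply: leq_trans (leq_divM k d); rewrite -/J.
    by apply: leq_mul => //; rewrite -ltnS.
  have [zm [hz1 hz2]] := reach_split hk hmd.
  have hzo : oriented_edge r G' zm := reach_oriented hx hz1.
  have hW := W_card hth hunif' hgood hzo (leqnn r).
  have hdis : #|A :&: Wset G' zm r| = 0%N.
    apply/eqP; rewrite cards_eq0; apply/eqP/setP => w; rewrite !inE.
    apply/negP => /andP[hwA hwW].
    have [j [z [hj hxz hzw]]] := hAw w hwA.
    have [_ _ hzmw] := W_props hzo hwW.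
    have h1 := reach_cat (reach_cat hxz hzw) (reach_sym hsym hzmw).
    have h2 := hmin _ (reach_cat h1 hz2).
    have h3 : (j * d + d <= m * d)%N by rewrite addnC -mulSn leq_mul2r hj orbT.
    exact: (@arith_contra (j * d) (m * d) k r h2 h3 hmd).
  exists (A :|: Wset G' zm r); split.
    rewrite cardsU hdis subn0 natrD mulrSr mulrDl mul1r.
    exact: lerD.
  move=> w; rewrite inE => /orP[/hAw [j [z [hj h1 h2]]] | hwW].
    by exists j, z; split => //; apply: ltnW.
  have [_ _ hzmw] := W_props hzo hwW.
  by exists m, zm; split.
have [A [hA _]] := hkey J.+1 (leqnn _).
have hn : (0 < n)%N by apply/card_gt0P; exists x0.
have hN : 0 < n%:R ^+ r :> R by rewrite exprn_gt0 // ltr0n.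
have hAle : #|A|%:R <= n%:R ^+ r :> R.
  by rewrite -natrX ler_nat -card_tuple max_card.
have hJ : J.+1%:R * eps ^+ r <= 1.
  rewrite -(ler_pM2r hN) mul1r -mulrA -exprMn.
  exact: le_trans hA hAle.
have hJ' : J.+1%:R <= eps ^- r.
  by rewrite -div1r ler_pdivlMr // exprn_gt0.
have hkJ : (k <= J.+1 * d)%N by apply: ltnW; apply: ltn_ceil.
apply: (@le_trans _ _ ((J.+1 * d)%N)%:R); first by rewrite ler_nat.
rewrite natrM mulrC.
have -> : (2 * r + 1)%:R = d%:R :> R by [].
by apply: ler_wpM2l => //; rewrite ler0n.
Qed.
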